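(* Let $M\in\mathbb{R}^{n\times n}$ be symmetric positive definite, $\delta_i,\delta_{i-1}>0$, $\epsilon\ge0$, let $\bar P:\mathbb{R}^n\to\mathbb{R}$ (control value held fixed) be differentiable and $L$-weakly convex, and let $D(\theta_i,\theta_{i-1})\in\mathbb{R}^{n\times n}$ be positive semi-definite. For $\theta_i,\theta_{i-1},\theta_{i-2}\in\mathbb{R}^n$ let $$\bar E_i(\theta_i)=\frac{1}{2\delta_i^2}\Big\|\theta_i-\big(1+\tfrac{\delta_i}{\delta_{i-1}}\big)\theta_{i-1}+\tfrac{\delta_i}{\delta_{i-1}}\theta_{i-2}\Big\|_M^2+\bar P(\theta_i),$$ $f_i^d=-D(\theta_i,\theta_{i-1})\frac{\theta_i-\theta_{i-1}}{\delta_i}$, and $\Lambda_i=\frac12\|\nabla\bar E_i(\theta_i)-f_i^d\|^2$. If $2\Lambda_i\le\epsilon^2$, then $$\Big[\tfrac12\Big\|\tfrac{\theta_i-\theta_{i-1}}{\delta_i}\Big\|_M^2+\bar P(\theta_i)\Big]-\Big[\tfrac12\Big\|\tfrac{\theta_{i-1}-\theta_{i-2}}{\delta_{i-1}}\Big\|_M^2+\bar P(\theta_{i-1})\Big]\le\frac{L\delta_i^2+\delta_i}{2\sigma_{\min}(M)}\Big\|\frac{\theta_i-\theta_{i-1}}{\delta_i}\Big\|_M^2+\frac{\delta_i\epsilon^2}{2}.$$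
   Context: $\|x\|_M^2=x^TMx$; $\sigma_{\min}(M)$ is the smallest singular value of $M$. A function $\phi$ is $L$-weakly convex if $\phi(x)+\frac L2\|x\|^2$ is convex. A matrix $D$ is positive semi-definite if $x^TDx\ge0$ for all $x$. The two bracketed quantities are discrete Hamiltonians at frames $i$ and $i-1$ evaluated with the same control value. *)

(* Defs.v *)
From HB Require Import structures.
From mathcomp Require Import all_boot all_order all_algebra.
From mathcomp Require Import all_classical all_reals all_analysis.
Set Implicit Arguments. Unset Strict Implicit. Unset Printing Implicit Defensive.
Import Order.TTheory GRing.Theory Num.Theory.
Import numFieldNormedType.Exports.
Local Open Scope ring_scope.
Local Open Scope classical_set_scope.

Section Defs.
Context {R : realType} {n : nat}.

Definition mnorm2 (M : 'M[R]_n) (x : 'cV[R]_n) : R := (x^T *m M *m x) 0 0.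

Definition sqnorm (x : 'cV[R]_n) : R := \sum_(i < n) (x i 0) ^+ 2.

Definition symmetric_mx (M : 'M[R]_n) : Prop := M^T = M.

Definition posdef (M : 'M[R]_n) : Prop :=
  forall x : 'cV[R]_n, x != 0 -> 0 < mnorm2 M x.

Definition psd (D : 'M[R]_n) : Prop := forall x : 'cV[R]_n, 0 <= mnorm2 D x.

Definition singular_value (M : 'M[R]_n) (s : R) : Prop :=
  0 <= s /\ eigenvalue (M^T *m M) (s ^+ 2).

Definition sigma_min (M : 'M[R]_n) : R := inf [set s | singular_value M s].

Definition convex_fun (f : 'cV[R]_n -> R) : Prop :=
  forall (x y : 'cV[R]_n) (t : R), 0 <= t <= 1 ->
    f (t *: x + (1 - t) *: y) <= t * f x + (1 - t) * f y.

Definition weakly_convex (L : R) (phi : 'cV[R]_n -> R) : Prop :=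
  convex_fun (fun x => phi x + L / 2 * sqnorm x).

Definition grad (f : 'cV[R]_n -> R) (x : 'cV[R]_n) : 'cV[R]_n :=
  \col_i ('D_(delta_mx i 0) f x).

End Defs.

(* Main.v *)
Require Import Defs.
From HB Require Import structures.
From mathcomp Require Import all_boot all_order all_algebra.
From mathcomp Require Import all_classical all_reals all_analysis.
Import Order.TTheory GRing.Theory Num.Theory.
Import numFieldNormedType.Exports.
Local Open Scope ring_scope.
From mathcomp Require Import ring lra.


Section Bil.
Local Open Scope classical_set_scope.
Context {R : realType} {n : nat}.
Implicit Types (A : 'M[R]_n) (x y z : 'cV[R]_n).

Definition bil A x y : R := (x^T *m A *m y) 0 0.
Definition dot x y : R := (x^T *m y) 0 0.

Lemma bilDl A x y z : bil A (x + y) z = bil A x z + bil A y z.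
Proof. by rewrite /bil linearD /= !mulmxDl mxE. Qed.
Lemma bilDr A x y z : bil A z (x + y) = bil A z x + bil A z y.
Proof. by rewrite /bil !mulmxDr mxE. Qed.
Lemma bilZl A k x y : bil A (k *: x) y = k * bil A x y.
Proof. by rewrite /bil linearZ /= -!scalemxAl mxE. Qed.
Lemma bilZr A k x y : bil A x (k *: y) = k * bil A x y.
Proof. by rewrite /bil -!scalemxAr mxE. Qed.
Lemma bilNl A x y : bil A (- x) y = - bil A x y.
Proof. by rewrite -scaleN1r bilZl mulN1r. Qed.
Lemma bilNr A x y : bil A x (- y) = - bil A x y.
Proof. by rewrite -scaleN1r bilZr mulN1r. Qed.
Lemma bilBl A x y z : bil A (x - y) z = bil A x z - bil A y z.
Proof. by rewrite bilDl bilNl. Qed.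
Lemma bilBr A x y z : bil A z (x - y) = bil A z x - bil A z y.
Proof. by rewrite bilDr bilNr. Qed.

Lemma m00T (B : 'M[R]_1) : B 0 0 = B^T 0 0.
Proof. by rewrite mxE. Qed.

Lemma bilC A x y : A^T = A -> bil A x y = bil A y x.
Proof.
move=> sA; rewrite /bil m00T !trmx_mul trmxK sA mulmxA //.
Qed.

Lemma dotE x y : dot x y = bil 1%:M x y.
Proof. by rewrite /dot /bil mulmx1. Qed.

Lemma dotC x y : dot x y = dot y x.
Proof. by rewrite !dotE bilC // trmx1. Qed.

Lemma bil_dot A x y : bil A x y = dot x (A *m y).
Proof. by rewrite /bil /dot mulmxA. Qed.

Lemma dot_sum x y : dot x y = \sum_k x k 0 * y k 0.
Proof. by rewrite /dot mxE; apply: eq_bigr => k _; rewrite mxE. Qed.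

Lemma sqnormE x : sqnorm x = dot x x.
Proof. by rewrite dot_sum /sqnorm; apply: eq_bigr => k _; rewrite expr2. Qed.

Lemma dot_ge0 x : 0 <= dot x x.
Proof. by rewrite -sqnormE /sqnorm sumr_ge0 // => k _; rewrite sqr_ge0. Qed.

Lemma dot_delta k y : dot (delta_mx k 0) y = y k 0.
Proof. by rewrite /dot trmx_delta -rowE mxE. Qed.

Lemma dot0_eq0 x : dot x x = 0 -> x = 0.
Proof.
rewrite -sqnormE /sqnorm => /psumr_eq0P H; apply/matrixP => i j.
rewrite (ord1 j) !mxE; apply/eqP; rewrite -sqrf_eq0; apply/eqP.
by apply: H => // k _; rewrite sqr_ge0.
Qed.

End Bil.


Section Der.
Local Open Scope classical_set_scope.
Context {R : realType} {n : nat}.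

Lemma derive_affine (f : 'cV[R]_n -> R) x v (k d : R) :
  (forall h : R, h != 0 -> h^-1 *: (f (h *: v + x) - f x) = k + h * d) ->
  derivable f x v /\ 'D_v f x = k.
Proof.
move=> H.
have cv : (fun h : R => h^-1 *: ((f \o shift x) (h *: v) - f x)) @ 0^' --> k.
  have c0 : (fun h : R => k + h * d) @ 0 --> k + 0 * d.
    have e : (fun h : R => k + h * d) = (cst k) \+ ((@id R) \* (cst d)) by [].
    rewrite e; apply: cvgD; first exact: cvg_cst.
    by apply: cvgM; [exact: cvg_id | exact: cvg_cst].
  rewrite mul0r addr0 in c0.
  have c1 : (fun h : R => k + h * d) @ 0^' --> k by exact: cvg_within_filter.
  apply: cvg_trans c1. apply: near_eq_cvg.
  near=> h; rewrite /= H //.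
  near: h; exact: nbhs_dnbhs_neq.
split; first by apply/cvg_ex; exists k.
by rewrite /derive; apply: cvg_lim.
Unshelve. all: by end_near.
Qed.

End Der.


Section Der2.
Local Open Scope classical_set_scope.
Context {R : realType} {n : nat}.
Implicit Types (A : 'M[R]_n) (x y z p q v w : 'cV[R]_n).

Lemma bilT A x y : bil A x y = bil A^T y x.
Proof. by rewrite /bil m00T !trmx_mul trmxK mulmxA. Qed.

Lemma bil_delta A k y : bil A (delta_mx k 0) y = (A *m y) k 0.
Proof. by rewrite bil_dot dot_delta. Qed.

Lemma derive_quad A (c : R) p q x v :
  derivable (fun th => c * mnorm2 A (th - p + q)) x v /\
  'D_v (fun th => c * mnorm2 A (th - p + q)) x =
     c * (bil A v (x - p + q) + bil A (x - p + q) v).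
Proof.
apply: (@derive_affine R n _ x v _ (c * bil A v v)) => h h0.
have -> : h *: v + x - p + q = h *: v + (x - p + q) by rewrite !addrA.
rewrite /mnorm2 -/(bil _ _ _) -/(bil _ _ _).
rewrite !bilDl !bilDr !bilZl !bilZr /GRing.scale /=.
by field.
Qed.

Lemma sum_derive (P : 'cV[R]_n -> R) x w : differentiable P x ->
  \sum_k w k 0 * 'D_(delta_mx k 0) P x = 'D_w P x.
Proof.
move=> dP; rewrite deriveE //.
under eq_bigr do rewrite deriveE //.
have wE : w = \sum_k w k 0 *: delta_mx k 0.
  apply/matrixP => i j; rewrite (ord1 j) summxE.
  rewrite (bigD1 i) //= big1 ?addr0 => [|k kni]; rewrite !mxE ?eqxx ?mulr1 //.
  by rewrite eq_sym (negbTE kni) andFb mulr0.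
rewrite [in RHS]wE linear_sum; apply: eq_bigr => k _; rewrite linearZ /=.
by [].
Qed.

Lemma dot_grad_E A (c : R) p q (P : 'cV[R]_n -> R) x w :
  (forall y, differentiable P y) ->
  dot w (grad (fun th => c * mnorm2 A (th - p + q) + P th) x) =
  c * (bil A w (x - p + q) + bil A (x - p + q) w) + 'D_w P x.
Proof.
move=> dP; set y := x - p + q.
have fE : (fun th => c * mnorm2 A (th - p + q) + P th) =
   (fun th => c * mnorm2 A (th - p + q)) + P by [].
rewrite dot_sum.
transitivity (\sum_k (c * (w k 0 * (A *m y) k 0 + w k 0 * (A^T *m y) k 0)
   + w k 0 * 'D_(delta_mx k 0) P x)).
  apply: eq_bigr => k _; rewrite mxE fE deriveD; last first.
  - exact: diff_derivable.
  - exact: (derive_quad A c p q x (delta_mx k 0)).1.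
  rewrite (derive_quad A c p q x (delta_mx k 0)).2 -/y.
  rewrite bil_delta (bilT A y) bil_delta.
  ring.
rewrite big_split /= -mulr_sumr big_split /= sum_derive //.
by rewrite -!dot_sum -!bil_dot -bilT.
Qed.


End Der2.


Section WC.
Local Open Scope classical_set_scope.
Context {R : realType} {n : nat}.

Lemma wc_bound (L : R) (P : 'cV[R]_n -> R) x w : 0 <= L ->
  (forall z, differentiable P z) -> weakly_convex L P ->
  'D_w P x <= P (w + x) - P x + L / 2 * dot w w.
Proof.
move=> L0 dP wc.
set K := P (w + x) - P x + L / 2 * dot w w.
have key : forall t : R, 0 < t -> t <= 1 -> t^-1 *: (P (t *: w + x) - P x) <= K.
  move=> t t0 t1.
  have := wc (w + x) x t; rewrite ltW //= t1 => /(_ isT).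
  have -> : t *: (w + x) + (1 - t) *: x = t *: w + x.
    by apply/matrixP => i j; rewrite !mxE; ring.
  rewrite !sqnormE !dotE !(bilDl, bilDr, bilZl, bilZr) -!dotE (dotC x w).
  move=> H.
  change (t^-1 * (P (t *: w + x) - P x) <= K).
  rewrite ler_pdivrMl //.
  have h1 : 0 <= L * t * t * dot w w.
    apply: mulr_ge0; last exact: dot_ge0.
    by apply: mulr_ge0; [apply: mulr_ge0 => //|]; exact: ltW.
  rewrite /K; nra.
have cv : (fun h : R => h^-1 *: ((P \o shift x) (h *: w) - P x)) @ 0^' --> 'D_w P x.
  have := @diff_derivable _ _ _ P x w (dP x). rewrite /derivable. exact.
have sub : (0:R)^'+ `=>` (0:R)^'.
  move=> A; rewrite /at_right /dnbhs /within /=.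
  apply: filterS => y Ay y0; apply: Ay.
  by rewrite /= gt_eqF.
have cvr := cvg_trans (cvg_fmap2 sub) cv.
apply: (cvgr_to_le cvr).
near=> h; rewrite /= key //.
all: near: h.
all: first [exact: nbhs_right_gt | apply: nbhs_right_le; exact: ltr01].
Unshelve. all: by end_near.
Qed.

End WC.


Section Cont.
Local Open Scope classical_set_scope.
Context {R : realType} {m : nat}.

Lemma quad_rV_diff (A : 'M[R]_m) (r : 'rV[R]_m) :
  differentiable (fun s : 'rV[R]_m => bil A s^T s^T) r.
Proof.
have E : (fun s : 'rV[R]_m => bil A s^T s^T) =
   \sum_j ((\sum_i ((fun s : 'rV[R]_m => s ord0 i) * cst (A i j)))
           * (fun s : 'rV[R]_m => s ord0 j)).
  apply/funext => s; rewrite /bil fct_sumE mxE; apply: eq_bigr => j _.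
  rewrite /= fct_sumE mxE !mxE; congr (_ * _).
  by apply: eq_bigr => i _; rewrite /= !mxE.
rewrite E; apply: differentiable_sum => j.
apply: differentiableM; last exact: differentiable_coord.
apply: differentiable_sum => i.
apply: differentiableM; first exact: differentiable_coord.
exact: differentiable_cst.
Qed.

Lemma quad_rV_cont (A : 'M[R]_m) :
  continuous (fun s : 'rV[R]_m => bil A s^T s^T).
Proof. move=> r; apply: differentiable_continuous; exact: quad_rV_diff. Qed.

End Cont.

Section Min.
Local Open Scope classical_set_scope.
Context {R : realType} {k : nat}.

Lemma exists_min (M : 'M[R]_k.+1) : exists x0 : 'cV[R]_k.+1,
  dot x0 x0 = 1 /\ forall y, dot y y = 1 -> bil M x0 x0 <= bil M y y.
Proof.
pose f := fun s : 'rV[R]_k.+1 => bil M s^T s^T.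
pose S := (fun r : 'rV[R]_k.+1 => bil 1%:M r^T r^T) @^-1` [set x : R | x = 1].
have S0 : S !=set0.
  exists (delta_mx 0 0); rewrite /S /= trmx_delta -dotE dot_delta mxE //.
have Sc : closed S.
  apply: (@preimage_closed _ _ (fun r : 'rV[R]_k.+1 => bil 1%:M r^T r^T)).
    by move=> r _; exact: quad_rV_cont.
  exact: closed_eq.
pose B := [set v : 'rV[R]_k.+1 | forall i, `[(-1 : R), 1]%classic (v ord0 i)].
have Bc : compact B.
  exact: (@rV_compact _ k.+1 (fun _ => `[(-1 : R), 1]%classic) (fun _ => @segment_compact R (-1) 1)).
have SB : S `<=` B.
  move=> r; rewrite /S /B /= -dotE dot_sum => H i.
  have : r ord0 i * r ord0 i <= 1.
    rewrite -H (bigD1 i) //= !mxE lerDl sumr_ge0 // => j _.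
    by rewrite !mxE -expr2 sqr_ge0.
  by rewrite in_itv /=; move=> h; apply/andP; split; nra.
have Scomp : compact S := subclosed_compact Sc Bc SB.
have [c cS cmin] := compact_EVT_min S0 Scomp (continuous_subspaceT (quad_rV_cont M)).
exists c^T; split.
  by move: cS; rewrite inE /S /= -dotE.
move=> y yy; have := cmin y^T; rewrite trmxK; apply.
by rewrite inE /S /= trmxK -dotE.
Qed.

End Min.


Section Spec.
Local Open Scope classical_set_scope.
Context {R : realType} {k : nat}.
Local Notation n := k.+1.

Lemma bil0l (A : 'M[R]_n) y : bil A 0 y = 0.
Proof. by rewrite -(scale0r y) bilZl mul0r. Qed.

Lemma dot_gt0 (x : 'cV[R]_n) : x != 0 -> 0 < dot x x.
Proof.
move=> xn0; rewrite lt_def dot_ge0 andbT; apply: contra xn0 => /eqP h.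
by apply/eqP; apply: dot0_eq0.
Qed.

Lemma spec (M : 'M[R]_n) : symmetric_mx M -> posdef M ->
  exists lam : R, 0 < lam /\ (forall x, lam * dot x x <= mnorm2 M x)
                  /\ sigma_min M = lam.
Proof.
move=> sM pM; have [x0 [x01 x0min]] := exists_min M.
set lam := bil M x0 x0.
have x0n0 : x0 != 0.
  by apply/eqP => h; move: x01; rewrite h dotE bil0l => /eqP; rewrite eq_sym oner_eq0.
have lam0 : 0 < lam by exact: pM.
have q0 : forall x, lam * dot x x <= bil M x x.
  move=> x; case: (eqVneq x 0) => [->|xn0].
    by rewrite dotE !bil0l mulr0.
  set D := dot x x; have D0 : 0 < D := dot_gt0 _ xn0.
  set s := Num.sqrt D; have s0 : 0 < s by rewrite sqrtr_gt0.
  have ss : s * s = D by rewrite -expr2 sqr_sqrtr // ltW.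
  have := x0min (s^-1 *: x); rewrite !dotE !bilZl !bilZr -!dotE -/D.
  have -> : s^-1 * (s^-1 * D) = 1 by rewrite -ss; field; rewrite gt_eqF.
  move=> /(_ erefl) h.
  have : lam * D <= s^-1 * (s^-1 * bil M x x) * D by rewrite ler_wpM2r // ltW.
  have -> : s^-1 * (s^-1 * bil M x x) * D = bil M x x.
    by rewrite -ss; field; rewrite gt_eqF.
  by [].
set w := M *m x0 - lam *: x0.
have wE : w = M *m x0 - lam *: x0 by [].
clearbody w.
have qw : forall t : R, 0 <= 2 * t * dot w w + t ^+ 2 * (bil M w w - lam * dot w w).
  move=> t; have := q0 (x0 + t *: w).
  rewrite !dotE !(bilDl, bilDr, bilZl, bilZr) -!dotE x01 -/lam.
  rewrite (bilC _ w x0 sM) (dotC w x0).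
  have -> : bil M x0 w = dot w w + lam * dot x0 w.
    have e : dot w w = dot w (M *m x0) - lam * dot x0 w.
      by rewrite {2}wE dotE bilBr bilZr -!dotE (dotC w x0).
    by rewrite bilC // bil_dot e; ring.
  move=> h; nra.
have ww0 : dot w w = 0.
  set dd := dot w w; set c := bil M w w - lam * dot w w.
  have c0 : 0 <= c.
    by rewrite /c subr_ge0; apply: q0.
  have dd0 : 0 <= dd := dot_ge0 w.
  have := qw (- dd / (c + 1)).
  have -> : 2 * (- dd / (c + 1)) * dd + (- dd / (c + 1)) ^+ 2 * c
            = - (dd ^+ 2 * (c + 2)) / (c + 1) ^+ 2.
    by field; rewrite gt_eqF // ltr_wpDl.
  rewrite pmulr_lge0 ?invr_gt0 ?exprn_gt0 ?ltr_wpDl // oppr_ge0 => h.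
  by apply/eqP; rewrite eq_le dd0 andbT; nra.
have Mx0 : M *m x0 = lam *: x0.
  by apply/subr0_eq; rewrite -wE; apply: dot0_eq0.
have lamS : singular_value M lam.
  split; first exact: ltW.
  apply/eigenvalueP; exists x0^T.
    rewrite mulmxA -trmx_mul Mx0 linearZ /= -scalemxAl -{1}sM -trmx_mul Mx0.
    by rewrite linearZ /= scalerA expr2.
  by apply: contra x0n0 => /eqP h; rewrite -[x0]trmxK h trmx0.
have lb : lbound [set s | singular_value M s] lam.
  move=> s [s0 /eigenvalueP [v vE vn0]].
  set x := v^T.
  have xn0 : x != 0 by apply: contra vn0 => /eqP h; rewrite -[v]trmxK -/x h trmx0.
  have MMx : M *m (M *m x) = s ^+ 2 *: x.
    have T : (M^T *m M)^T = M^T *m M by rewrite trmx_mul trmxK.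
    by rewrite mulmxA -{1}sM /x -T -trmx_mul vE linearZ.
  have E1 : s ^+ 2 * dot x x = dot (M *m x) (M *m x).
    by rewrite dotE -bilZr -dotE -MMx -bil_dot bilC // bil_dot.
  set z := M *m x - lam *: x.
  have Mx : M *m x = z + lam *: x by rewrite /z subrK.
  have zx : dot z x = bil M x x - lam * dot x x.
    by rewrite /z dotE bilBl bilZl -!dotE (dotC (M *m x)) -bil_dot.
  clearbody z.
  have E2 : dot (M *m x) (M *m x) = dot z z + 2 * lam * dot z x + lam ^+ 2 * dot x x.
    rewrite Mx !dotE !(bilDl, bilDr, bilZl, bilZr) -!dotE (dotC x z); ring.
  have h1 := q0 x; have h2 := dot_ge0 z; have D0 := dot_gt0 _ xn0.
  have h3 : lam ^+ 2 * dot x x <= s ^+ 2 * dot x x.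
    rewrite E1 E2 zx; nra.
  have h4 : lam ^+ 2 <= s ^+ 2 by rewrite -(ler_pM2r D0).
  nra.
exists lam; split => //; split; first exact: q0.
apply/eqP; rewrite eq_le; apply/andP; split.
  by apply: (ge_inf _ lamS)=> //; exists lam.
by apply: lb_le_inf => //; exists lam.
Qed.

End Spec.


Section Help.
Local Open Scope classical_set_scope.
Context {R : realType} {n : nat}.
Implicit Types (A : 'M[R]_n) (a b : 'cV[R]_n).

Lemma L_cs a b : 2 * dot a b <= dot a a + dot b b.
Proof.
have := dot_ge0 (a - b); rewrite dotE !(bilBl, bilBr) -!dotE (dotC b a).
lra.
Qed.

Lemma L_psd A a b : posdef A -> 0 <= bil A (a - b) (a - b).
Proof.
move=> pA; case: (eqVneq (a - b) 0) => [->|h]; first by rewrite /bil trmx0 !mul0mx mxE.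
exact/ltW/pA.
Qed.

Lemma L_F3 A a b : A^T = A -> posdef A ->
  0 <= bil A a a - 2 * bil A a b + bil A b b.
Proof.
move=> sA pA; have := L_psd A a b pA.
rewrite !(bilBl, bilBr) (bilC A b a sA); lra.
Qed.

Lemma L_b1 A a b (t : R) : A^T = A ->
  bil A a (t *: (a - b)) + bil A (t *: (a - b)) a = 2 * t * (bil A a a - bil A a b).
Proof.
move=> sA; rewrite bilZl bilZr !(bilBl, bilBr) (bilC A b a sA); ring.
Qed.

Lemma L_fd a x (B : 'M[R]_n) : dot a (x - - (B *m a)) = dot a x + bil B a a.
Proof. by rewrite opprK dotE bilDr -!dotE bil_dot. Qed.

Lemma derZ (P : 'cV[R]_n -> R) x (t : R) w : differentiable P x ->
  'D_(t *: w) P x = t * 'D_w P x.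
Proof. by move=> dP; rewrite !deriveE // linearZ. Qed.

Lemma dotZZ (t : R) a : dot (t *: a) (t *: a) = t ^+ 2 * dot a a.
Proof. by rewrite dotE bilZl bilZr -dotE mulrA -expr2. Qed.

End Help.


Theorem lemma19 (R : realType) (n : nat) (M : 'M[R]_n)
  (delta_i delta_i1 eps L : R) (Pbar : 'cV[R]_n -> R)
  (D : 'cV[R]_n -> 'cV[R]_n -> 'M[R]_n)
  (theta_i theta_i1 theta_i2 : 'cV[R]_n) :
  symmetric_mx M -> posdef M ->
  0 < delta_i -> 0 < delta_i1 -> 0 <= eps -> 0 <= L ->
  (forall x, differentiable Pbar x) -> weakly_convex L Pbar ->
  psd (D theta_i theta_i1) ->
  let Ebar := fun th : 'cV[R]_n =>
    (2 * delta_i ^+ 2)^-1 *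
      mnorm2 M (th - (1 + delta_i / delta_i1) *: theta_i1
                   + (delta_i / delta_i1) *: theta_i2) + Pbar th in
  let fd := - (D theta_i theta_i1 *m ((delta_i^-1) *: (theta_i - theta_i1))) in
  let Lambda := 2^-1 * sqnorm (grad Ebar theta_i - fd) in
  2 * Lambda <= eps ^+ 2 ->
  (2^-1 * mnorm2 M (delta_i^-1 *: (theta_i - theta_i1)) + Pbar theta_i)
  - (2^-1 * mnorm2 M (delta_i1^-1 *: (theta_i1 - theta_i2)) + Pbar theta_i1)
  <= (L * delta_i ^+ 2 + delta_i) / (2 * sigma_min M)
       * mnorm2 M (delta_i^-1 *: (theta_i - theta_i1))
     + delta_i * eps ^+ 2 / 2.
Proof.
move: M Pbar D theta_i theta_i1 theta_i2.
case: n => [|k] M Pbar D ti ti1 ti2 sM pM d0 d10 e0 L0 dP wc psdD Ebar fd Lambda HL.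
  have m0 : forall (A : 'M[R]_0) x, mnorm2 A x = 0.
    by move=> A x; rewrite /mnorm2 mxE big_ord0.
  have -> : ti1 = ti by apply/matrixP => -[].
  rewrite !m0 !mulr0 !add0r subrr.
  by apply: divr_ge0; [apply: mulr_ge0; [exact: ltW | exact: sqr_ge0] | ].
set d := delta_i; set d1 := delta_i1.
set v := d^-1 *: (ti - ti1); set u := d1^-1 *: (ti1 - ti2).
set g := grad Ebar ti - fd.
have [lam [lam0 [lamv ->]]] := spec M sM pM.
set Mvv := mnorm2 M v; set Muu := mnorm2 M u.
set Muv := bil M v u; set vv := dot v v; set gg := dot g g.
set pv := 'D_v Pbar ti; set Dvv := bil (D ti ti1) v v.
set dvg := dot v g.
have yE : ti - (1 + d / d1) *: ti1 + (d / d1) *: ti2 = d *: (v - u).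
  apply/matrixP => i j; rewrite !mxE; field.
  by apply/andP; split; rewrite gt_eqF.
have F1 : d * dvg = Mvv - Muv + d * pv + d * Dvv.
  rewrite /dvg /g /fd L_fd /Ebar dot_grad_E // yE L_b1 //.
  rewrite /Mvv /Muv /pv /Dvv /mnorm2 -/(bil M v v).
  by rewrite /d; field; rewrite gt_eqF.
have F2 : - d * pv <= Pbar ti1 - Pbar ti + L / 2 * (d ^+ 2 * vv).
  have wv : ti1 - ti = (-d) *: v.
    by rewrite /v scalerA mulNr mulfV ?gt_eqF // scaleN1r opprB.
  have := wc_bound L Pbar ti (ti1 - ti) L0 dP wc.
  by rewrite subrK wv derZ // dotZZ sqrrN.
have F3 : 0 <= Mvv - 2 * Muv + Muu := L_F3 M v u sM pM.
have F4 : 2 * dvg <= vv + gg := L_cs v g.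
have F5 : gg <= eps ^+ 2.
  by move: HL; rewrite /Lambda sqnormE -/g /gg; lra.
have F7 : 0 <= Dvv := psdD v.
have F8 : (L * d ^+ 2 + d) / 2 * vv <= (L * d ^+ 2 + d) / (2 * lam) * Mvv.
  have vvM : vv <= Mvv / lam by rewrite ler_pdivlMr // mulrC; exact: lamv.
  have -> : (L * d ^+ 2 + d) / (2 * lam) * Mvv = (L * d ^+ 2 + d) / 2 * (Mvv / lam).
    by field; rewrite gt_eqF.
  apply: ler_wpM2l => //; apply: divr_ge0 => //.
  by apply: addr_ge0; [apply: mulr_ge0 => //; exact: sqr_ge0 | exact: ltW].
have G1 : d * (2 * dvg) <= d * (vv + gg) by rewrite ler_wpM2l // ltW.
have G2 : d * gg <= d * eps ^+ 2 by rewrite ler_wpM2l // ltW.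
have G3 : 0 <= d * Dvv by rewrite mulr_ge0 // ltW.
rewrite -/Mvv -/Muu.
lra.
Qed.
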